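(* For every integer $n \geq 1$, the number of linear arrangements of $\{1,\ldots,n\}$ that avoid the patterns $12, 23, \ldots, (n-1)n$ and contain the pattern $n1$ is exactly $D_{n-1}$ (with the convention $D_0 = 0$).
   Context: A linear arrangement of $\{1,\ldots,n\}$ is a sequence $a_1\cdots a_n$ in which each of $1,\ldots,n$ appears exactly once. It contains the pattern $ij$ if $a_t=i$ and $a_{t+1}=j$ for some $t$ (i.e. $i$ is immediately followed by $j$); otherwise it avoids it. $D_m$ is the number of linear arrangements of $\{1,\ldots,m\}$ avoiding all of the patterns $12, 23, \ldots, (m-1)m, m1$; $D_0 = 0$. *)

(* Defs.v *)
From mathcomp Require Import all_boot all_order all_fingroup.
Set Implicit Arguments. Unset Strict Implicit. Unset Printing Implicit Defensive.

(* A linear arrangement of {1,...,n} is encoded by a permutation s of 'I_n: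
   the sequence a_1 ... a_n is [seq (s t).+1 | t <- enum 'I_n]. *)
Definition arrangement (n : nat) (s : {perm 'I_n}) : seq nat :=
  [seq (s t).+1 | t <- enum 'I_n].

Definition contains_pat (a : seq nat) (i j : nat) : bool :=
  has (fun t => (nth 0 a t == i) && (nth 0 a t.+1 == j)) (iota 0 (size a).-1).

Definition avoids_succ (n : nat) (a : seq nat) : bool :=
  all (fun k => ~~ contains_pat a k k.+1) (iota 1 n.-1).

Definition D (m : nat) : nat :=
  if m is 0 then 0
  else #|[set s : {perm 'I_m} | avoids_succ m (arrangement s)
                                && ~~ contains_pat (arrangement s) m 1]|.

(* Main.v *)
Require Import Defs.
From mathcomp Require Import all_boot all_order all_fingroup.
From mathcomp Require Import zify.
Set Implicit Arguments. Unset Strict Implicit. Unset Printing Implicit Defensive.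

Lemma cpP (s : seq nat) u v :
  reflect (exists t, [/\ t.+1 < size s, nth 0 s t = u & nth 0 s t.+1 = v])
          (contains_pat s u v).
Proof.
apply: (iffP hasP) => [[t]|[t [H1 H2 H3]]].
  rewrite mem_iota => /andP[_ Ht] /andP[/eqP H1 /eqP H2].
  by exists t; split => //; lia.
by exists t; [rewrite mem_iota; lia | rewrite H2 H3 !eqxx].
Qed.

Lemma avP n (s : seq nat) :
  reflect (forall k, 1 <= k < n -> ~~ contains_pat s k k.+1) (avoids_succ n s).
Proof.
apply: (iffP allP) => H k Hk; apply: H; first by rewrite mem_iota; lia.
by move: Hk; rewrite mem_iota; lia.
Qed.

Definition ins p (x : nat) (s : seq nat) := take p s ++ x :: drop p s.

Lemma size_ins p x s : size (ins p x s) = (size s).+1.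
Proof. by rewrite /ins size_cat /= addnS -size_cat cat_take_drop. Qed.

Lemma nth_ins p x s t : p <= size s ->
  nth 0 (ins p x s) t = if t < p then nth 0 s t else if t == p then x else nth 0 s t.-1.
Proof.
move=> Hp; rewrite /ins nth_cat size_takel //.
case: ltnP => Htp; first by rewrite nth_take.
case: eqP => [->|Hne]; first by rewrite subnn.
have -> : t - p = (t.-1 - p).+1 by lia.
by rewrite /= nth_drop; congr nth; lia.
Qed.

Lemma perm_ins p x s : perm_eq (ins p x s) (x :: s).
Proof.
by rewrite /ins -cat1s perm_catCA /= cat_take_drop.
Qed.

Lemma L1 p x s u v : p <= size s -> contains_pat (ins p x s) u v ->
  contains_pat s u v \/ (0 < p /\ u = nth 0 s p.-1 /\ v = x) \/ (u = x /\ v = nth 0 s p).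
Proof.
move=> Hp /cpP[t []]; rewrite size_ins !nth_ins //.
case: (ltngtP t.+1 p) => H1.
- move=> Ht <- <-; left; apply/cpP; exists t; split => //; lia.
- case: eqP => [->|Hne] Ht <- <-.
    by right; right.
  left; apply/cpP; exists t.-1.
  have -> : t.-1.+1 = t by lia.
  split => //; lia.
- move=> Ht <- <-; right; left; subst p; split => //.
Qed.

Lemma L2 p x s u v : p <= size s -> contains_pat s u v ->
  contains_pat (ins p x s) u v \/ (0 < p /\ u = nth 0 s p.-1 /\ v = nth 0 s p).
Proof.
move=> Hp /cpP[t [Ht <- <-]].
case: (ltngtP t.+1 p) => H1.
- left; apply/cpP; exists t; rewrite size_ins !nth_ins //.
  have -> : t < p by lia.
  by rewrite H1; split => //; lia.
- left; apply/cpP; exists t.+1; rewrite size_ins !nth_ins //.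
  have -> : (t.+1 < p) = false by lia.
  have -> : (t.+2 < p) = false by lia.
  have -> : (t.+1 == p) = false by lia.
  have -> : (t.+2 == p) = false by lia.
  by split.
- by right; subst p.
Qed.

Lemma L3 p x s : p < size s -> contains_pat (ins p x s) x (nth 0 s p).
Proof.
move=> Hp; apply/cpP; exists p; rewrite size_ins !nth_ins ?ltnn ?eqxx; try lia.
have -> : (p.+1 < p) = false by lia.
by have -> : (p.+1 == p) = false by lia.
Qed.

Lemma L4 p x s : 0 < p <= size s -> contains_pat (ins p x s) (nth 0 s p.-1) x.
Proof.
move=> Hp; apply/cpP; exists p.-1; rewrite size_ins !nth_ins; try lia.
have -> : p.-1 < p by lia.
have -> : p.-1.+1 = p by lia.
by rewrite ltnn eqxx; split => //; lia.
Qed.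

Lemma L5 p s : 0 < p < size s -> contains_pat s (nth 0 s p.-1) (nth 0 s p).
Proof.
move=> Hp; apply/cpP; exists p.-1.
have -> : p.-1.+1 = p by lia.
split => //; lia.
Qed.
Lemma card_cnt n (P : pred (seq nat)) :
  #|[set s : {perm 'I_n} | P (arrangement s)]| = count P (map (@arrangement n) (enum {perm 'I_n})).
Proof.
rewrite cardE /enum_mem size_filter count_map count_filter.
apply: eq_count => s; by rewrite !inE andbT.


Qed.

Lemma nth_arr n (s : {perm 'I_n}) (i : 'I_n) : nth 0 (arrangement s) i = (s i).+1.
Proof. by rewrite /arrangement (nth_map i) ?size_enum_ord // nth_ord_enum. Qed.

Lemma arr_inj n : injective (@arrangement n).
Proof.
move=> s1 s2 H; apply/perm.permP => i; apply: val_inj.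
by have := nth_arr s1 i; rewrite H nth_arr => -[].
Qed.

Lemma arr_perm n (s : {perm 'I_n}) : perm_eq (arrangement s) (iota 1 n).
Proof.
have -> : iota 1 n = map (fun i : 'I_n => (val i).+1) (enum 'I_n).
  rewrite -(addn0 1) iotaDl -val_enum_ord -map_comp; apply: eq_map => i /=; by rewrite add1n.
have -> : arrangement s = map (fun i : 'I_n => (val i).+1) (map s (enum 'I_n)) by rewrite /arrangement; elim: (enum _) => //= ? ? ->.
apply: perm_map; apply: uniq_perm.
- by rewrite map_inj_uniq ?enum_uniq //; exact: perm_inj.
- exact: enum_uniq.
move=> y; rewrite mem_enum; apply/mapP; exists (s^-1 y)%g; by rewrite ?mem_enum ?permKV.
Qed.

Lemma arr_surj n t : perm_eq t (iota 1 n) -> exists s : {perm 'I_n}, arrangement s = t.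
Proof.
move=> Ht.
have Hsz : size t = n by rewrite (perm_size Ht) size_iota.
have Hu : uniq t by rewrite (perm_uniq Ht) iota_uniq.
have Hr : forall i, i < n -> 1 <= nth 0 t i <= n.
  move=> i Hi; have : nth 0 t i \in iota 1 n by rewrite -(perm_mem Ht) mem_nth // Hsz.
  rewrite mem_iota; lia.
pose f := fun i : 'I_n => insubd i (nth 0 t i).-1 : 'I_n.
have Hf : forall i : 'I_n, val (f i) = (nth 0 t i).-1.
  move=> i; rewrite /f insubdK //; have := Hr i (ltn_ord i); rewrite /=; lia.
have finj : injective f.
  move=> i j Hij; apply: val_inj; have := congr1 val Hij; rewrite !Hf => H.
  have Hi := Hr i (ltn_ord i); have Hj := Hr j (ltn_ord j).
  apply/eqP; rewrite -(nth_uniq 0 _ _ Hu) ?Hsz ?ltn_ord //.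
  have E : nth 0 t i = nth 0 t j by lia.
  by apply/eqP.
exists (perm finj); apply: (eq_from_nth (x0 := 0)).
  by rewrite size_map size_enum_ord Hsz.
move=> i; rewrite size_map size_enum_ord => Hi.
have := nth_arr (perm finj) (Ordinal Hi); rewrite /= => ->.
rewrite permE Hf; have := Hr i Hi. rewrite /=; lia.
Qed.

Lemma card_arr n (P : pred (seq nat)) :
  #|[set s : {perm 'I_n} | P (arrangement s)]| = count P (permutations (iota 1 n)).
Proof.
rewrite card_cnt.
have H : perm_eq (map (@arrangement n) (enum {perm 'I_n})) (permutations (iota 1 n)).
  apply: uniq_perm; first by rewrite map_inj_uniq ?enum_uniq //; exact: arr_inj.
    exact: permutations_uniq.
  move=> t; rewrite mem_permutations; apply/mapP/idP => [[s _ ->]|/arr_surj [s <-]].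
    exact: arr_perm.
  by exists s; rewrite ?mem_enum.
by move/seq.permP: H.
Qed.

Ltac fixsz := repeat match goal with
  | |- context [@size ?T ?x] => lazymatch T with nat => fail | _ => change (@size T x) with (@size nat x) end
  | H : context [@size ?T ?x] |- _ => lazymatch T with nat => fail | _ => change (@size T x) with (@size nat x) in H end
  | |- context [@nth ?T ?d ?x] => lazymatch T with nat => fail | _ => change (@nth T d x) with (@nth nat d x) end
  | H : context [@nth ?T ?d ?x] |- _ => lazymatch T with nat => fail | _ => change (@nth T d x) with (@nth nat d x) in H end
  end.
Ltac slia := fixsz; lia.

Definition del (x : nat) (a : seq nat) :=
  take (index x a) a ++ drop (index x a).+1 a.

Lemma size_del x (a : seq nat) : x \in a -> size (del x a) = (size a).-1.
Proof.
move=> Hx; have Hp : index x a < size a by rewrite index_mem.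
rewrite /del size_cat size_takel ?size_drop; lia.
Qed.

Lemma delK x (a : seq nat) : x \in a -> ins (index x a) x (del x a) = a.
Proof.
move=> Hx; have Hp : index x a < size a by rewrite index_mem.
have Hs : size (take (index x a) a) = index x a by rewrite size_takel // ltnW.
rewrite /ins /del take_size_cat // drop_size_cat //.
by rewrite -[RHS](cat_take_drop (index x a) a) (drop_nth 0 Hp) nth_index.
Qed.

Lemma insK p x (s : seq nat) : p <= size s -> x \notin s -> del x (ins p x s) = s.
Proof.
move=> Hp Hx.
have Hs : size (take p s) = p by rewrite size_takel.
have Hi : index x (ins p x s) = p.
  rewrite /ins index_cat.
  have -> : (x \in take p s) = false by apply/negP => /mem_take; apply/negP.
  by rewrite Hs /= eqxx addn0.
rewrite /del Hi /ins take_size_cat // drop_cat Hs ltnNge leqnSn /= subSnn /= drop0.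
by rewrite cat_take_drop.
Qed.

Lemma cp_mem (s : seq nat) u v : contains_pat s u v -> v \in s.
Proof. by case/cpP => t [Ht _ <-]; rewrite mem_nth. Qed.

Lemma Hiota m : perm_eq (iota 1 m.+1) (m.+1 :: iota 1 m).
Proof.
by rewrite -(addn1 m) iotaD add1n perm_sym -cat1s perm_catC addn1.
Qed.

Lemma main m : 1 <= m ->
  count (fun a => avoids_succ m.+1 a && contains_pat a m.+1 1) (permutations (iota 1 m.+1))
  = count (fun b => avoids_succ m b && ~~ contains_pat b m 1) (permutations (iota 1 m)).
Proof.
move=> Hm.
set P := fun a => _; set Q := fun b => _.
have Fwd : forall a : seq nat, a \in filter P (permutations (iota 1 m.+1)) ->
   [/\ ins (index 1 (del m.+1 a)) m.+1 (del m.+1 a) = a,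
       Q (del m.+1 a) & perm_eq (del m.+1 a) (iota 1 m)].
  move=> a; rewrite mem_filter mem_permutations => /andP[/andP[Hav Hc] Hpa].
  have Hu : uniq a by rewrite (perm_uniq Hpa) iota_uniq.
  have Hsa : size a = m.+1 by rewrite (perm_size Hpa) size_iota.
  case/cpP: (Hc) => t [Ht H1 H2].
  have Hna : m.+1 \in a.
    by rewrite -H1 mem_nth // (ltnW Ht).
  have Htp : index m.+1 a = t by rewrite -H1 index_uniq //; slia.
  set b := del m.+1 a.
  have Ea := delK Hna; rewrite Htp -/b in Ea.
  have Hsb : size b = m by rewrite /b size_del // Hsa.
  have Hbt : nth 0 b t = 1.
    by move: H2; rewrite -Ea nth_ins ?ltnn ?eqxx; try slia; rewrite ltnNge leqnSn /=; case: eqP => //; slia.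
  have Hpb : perm_eq b (iota 1 m).
    have := perm_ins t m.+1 b; rewrite Ea => H.
    rewrite -(perm_cons m.+1). have H3 := @perm_trans _ _ _ _ Hpa (Hiota m). rewrite perm_sym in H. exact: (@perm_trans _ a _ _ H H3).
  have Hub : uniq b by rewrite (perm_uniq Hpb) iota_uniq.
  have -> : index 1 b = t by rewrite -Hbt index_uniq //; slia.
  split => //; apply/andP; split.
  - apply/avP => k Hk; apply/negP => Hkc.
    case: (L2 m.+1 (ltnW (_ : t < size b)) Hkc) => [|Hkc'|[_ [_ E]]].
    + slia.
    + rewrite Ea in Hkc'; have Hk' : 1 <= k < m.+1 by slia.
      by move/avP/(_ k Hk'): Hav; rewrite Hkc'.
    + rewrite Hbt in E; slia.
  - apply/negP => /cpP [t' [Ht' H1' H2']].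
    have Et : t'.+1 = t by apply/eqP; rewrite -(nth_uniq 0 _ _ Hub) ?H2' ?Hbt //; slia.
    have Htb : 0 < t <= size b by slia.
    have := L4 m.+1 Htb; rewrite Ea.
    have -> : nth 0 b t.-1 = m by rewrite -Et.
    move=> H; have Hk' : 1 <= m < m.+1 by slia.
    by move/avP/(_ m Hk'): Hav; rewrite H.
have Bwd : forall b : seq nat, b \in filter Q (permutations (iota 1 m)) ->
   [/\ P (ins (index 1 b) m.+1 b), perm_eq (ins (index 1 b) m.+1 b) (iota 1 m.+1)
     & del m.+1 (ins (index 1 b) m.+1 b) = b].
  move=> b; rewrite mem_filter mem_permutations => /andP[/andP[Hav Hnc] Hpb].
  have Hub : uniq b by rewrite (perm_uniq Hpb) iota_uniq.
  have Hsb : size b = m by rewrite (perm_size Hpb) size_iota.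
  have H1b : 1 \in b by rewrite (perm_mem Hpb) mem_iota; slia.
  have Hnb : m.+1 \notin b by rewrite (perm_mem Hpb) mem_iota; slia.
  set p := index 1 b.
  have Hp : p < size b by rewrite index_mem.
  have Hbp : nth 0 b p = 1 by rewrite nth_index.
  have Hperm : perm_eq (ins p m.+1 b) (iota 1 m.+1).
    have := Hiota m; rewrite perm_sym => Hi.
    have Hc : perm_eq (m.+1 :: b) (m.+1 :: iota 1 m) by rewrite perm_cons.
    exact: (@perm_trans _ (m.+1 :: b) _ _ (perm_ins _ _ _) (@perm_trans _ (m.+1 :: iota 1 m) _ _ Hc Hi)).
  split => //; last exact: insK (ltnW Hp) Hnb.
  apply/andP; split; last by have := L3 m.+1 Hp; rewrite Hbp.
  apply/avP => k Hk; apply/negP => Hc.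
  case: (L1 (ltnW Hp) Hc) => [Hc'|[[Hp0 [E1 E2]]|[E1 E2]]].
  - case: (ltnP k m) => Hkm.
      have Hk' : 1 <= k < m by slia.
      by move/avP/(_ k Hk'): Hav; rewrite Hc'.
    have Ek : k = m by slia.
    subst k; have := cp_mem Hc'; by rewrite (negbTE Hnb).
  - have Hp1 : 0 < p < size b by slia.
    have := L5 Hp1; rewrite -E1 Hbp.
    have -> : k = m by slia.
    by rewrite (negbTE Hnc).
  - slia.
rewrite -!size_filter.
have Hpe : perm_eq (map (del m.+1) (filter P (permutations (iota 1 m.+1))))
                   (filter Q (permutations (iota 1 m))).
  apply: uniq_perm.
  - rewrite map_inj_in_uniq ?filter_uniq ?permutations_uniq // => a1 a2 H1 H2 E.
    case: (Fwd _ H1) => E1 _ _; case: (Fwd _ H2) => E2 _ _.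
    by rewrite -E1 -E2 E.
  - by rewrite filter_uniq ?permutations_uniq.
  - move=> b; apply/mapP/idP => [[a Ha ->]|Hb].
      case: (Fwd _ Ha) => _ HQ Hp; by rewrite mem_filter HQ mem_permutations Hp.
    case: (Bwd _ Hb) => HP Hp E; exists (ins (index 1 b) m.+1 b) => //.
    by rewrite mem_filter HP mem_permutations Hp.
by rewrite -(perm_size Hpe) size_map.
Qed.
Unset Implicit Arguments.

Theorem corollary2p2 (n : nat) (hn : 1 <= n) :
  #|[set s : {perm 'I_n} | avoids_succ n (arrangement s)
                          && contains_pat (arrangement s) n 1]| = D n.-1.
Proof.
case: n hn => [//|m] _.
rewrite (@card_arr _ (fun a => avoids_succ m.+1 a && contains_pat a m.+1 1)).
case: m => [|m]; first by [].
rewrite /D (@card_arr _ (fun a => avoids_succ m.+1 a && ~~ contains_pat a m.+1 1)).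
exact: main.
Qed.
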